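(* Let $(m,n)$ be relatively prime non-negative integers, $\mathscr{L}$ an $(m,n)$-periodic higher spin vertex configuration and $\mathcal{A}=\mathcal{A}(\mathscr{L})$. Let $\underline{i}=i_1\cdots i_\ell$ be a finite sequence with entries in $\{1,2\}$ and $\lambda\in\mathbb{Z}$. Then the following are equivalent: (i) $X(\underline{i})^\ast X(\underline{i})$ (an element of $\mathbb{C}[H]$) belongs to the principal ideal $(H-\lambda)$ of $\mathbb{C}[H]$; (ii) the based face path $\bar\pi(\underline{i},\lambda)$ intersects an edge in $\overline{\mathscr{L}}$.
   Context: Noncommutative Kleinian fiber product: $\tilde{\mathcal{A}}_{\alpha_1,\alpha_2}(p_1,p_2)$ is generated by $H,X_1^\pm,X_2^\pm$ with relations ($i=1,2$) $HX_i^\pm-X_i^\pm H=\pm\alpha_iX_i^\pm$, $X_i^+X_i^-=p_i(H-\alpha_i/2)$, $X_i^-X_i^+=p_i(H+\alpha_i/2)$, $X_1^+X_2^-=X_2^-X_1^+$, $X_1^-X_2^+=X_2^+X_1^-$; $\mathcal{A}_{\alpha_1,\alpha_2}(p_1,p_2)$ is its quotient by the ideal of all $a$ with $f(H)a=0$ for some nonzero polynomial $f$. It has the anti-involution $\ast$ with $H^\ast=H$, $(X_i^\pm)^\ast=X_i^\mp$, and is $\mathbb{Z}^2$-graded ($\deg H=0$, $\deg X_i^\pm=\pm\mathbf{e}_i$) with degree-zero part $\mathbb{C}[H]$. Configurations: $E_1=\mathbb{Z}^2+(1/2,0)$, $E_2=\mathbb{Z}^2+(0,1/2)$, $E=E_1\cup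 E_2$, $V=\mathbb{Z}^2+(1/2,1/2)$, $\Gamma_{m,n}=\mathbb{Z}(m,n)$. An $(m,n)$-periodic higher spin vertex configuration is $\mathscr{L}:E\to\mathbb{N}$ with $\mathscr{L}(e+(m,n))=\mathscr{L}(e)$, $\mathscr{L}(e+k(-n,m))=0$ for $|k|\gg0$ (each $e$), and $\mathscr{L}(v-(1/2,0))+\mathscr{L}(v-(0,1/2))=\mathscr{L}(v+(1/2,0))+\mathscr{L}(v+(0,1/2))$ ($v\in V$). With $(\alpha_1,\alpha_2)=(-n,m)$: $P_i^{\mathscr{L}}(u)=\prod_{(x_1,x_2)+\Gamma_{m,n}\in E_i/\Gamma_{m,n}}(u-(x_1\alpha_1+x_2\alpha_2))^{\mathscr{L}(x_1,x_2)}$, $\mathcal{A}(\mathscr{L})=\mathcal{A}_{-n,m}(P_1^{\mathscr{L}},P_2^{\mathscr{L}})$. For $e=(x_1,x_2)\in E_i$, $[e]=\{a\in\mathbb{R}^2:a_i=x_i,|a_{3-i}-x_{3-i}|\le1/2\}$; $\mathbb{T}_{m,n}=\mathbb{R}^2/\Gamma_{m,n}$; $\overline{\mathscr{L}}$ is the image of $\bigcup_{\mathscr{L}(e)>0}[e]$ in $\mathbb{T}_{m,n}$. $X(\underline{i})=X_{i_\ell}^+\cdots X_{i_1}^+$. For $\lambda\in\mathbb{Z}$, $\bar\lambda=(x_1,x_2)+\Gamma_{m,n}$ for any $(x_1,x_2)\in\mathbb{Z}^2$ with $-nx_1+mx_2=\lambda$. The based face path $\bar\pi(\underline{i},\lambda)\subset\mathbb{T}_{m,n}$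 is the union of the segments $[\bar\lambda+\mathbf{e}_{i_1}+\cdots+\mathbf{e}_{i_{r-1}},\ \bar\lambda+\mathbf{e}_{i_1}+\cdots+\mathbf{e}_{i_r}]$, $r=1,\dots,\ell$, where $\mathbf{e}_1=(1,0)$, $\mathbf{e}_2=(0,1)$ act by translation on $\mathbb{T}_{m,n}$. *)

(* Defs.v *)
From HB Require Import structures.
From mathcomp Require Import all_boot all_order all_algebra all_field.
From mathcomp Require Import Rstruct.

Set Implicit Arguments. Unset Strict Implicit. Unset Printing Implicit Defensive.
Import Order.TTheory GRing.Theory Num.Theory.
Local Open Scope ring_scope.

(* An edge of E_1 = Z^2 + (1/2,0) is encoded by (a,b) : int*int, standing for
   the point (a+1/2, b); an edge of E_2 = Z^2 + (0,1/2) is encoded by (a,b),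
   standing for (a, b+1/2).  A configuration L : E -> N is the pair (L1,L2). *)

Definition periodic_config (m n : nat) (L1 L2 : int -> int -> nat) : Prop :=
  (forall a b : int, L1 (a + m%:Z) (b + n%:Z) = L1 a b) /\
  (forall a b : int, L2 (a + m%:Z) (b + n%:Z) = L2 a b) /\
  (forall a b : int, exists K : nat, forall k : int,
      (K <= absz k)%N -> L1 (a - k * n%:Z) (b + k * m%:Z) = 0%N) /\
  (forall a b : int, exists K : nat, forall k : int,
      (K <= absz k)%N -> L2 (a - k * n%:Z) (b + k * m%:Z) = 0%N) /\
  (* conservation at the vertex v = (a+1/2, b+1/2):
     L(v-(1/2,0)) + L(v-(0,1/2)) = L(v+(1/2,0)) + L(v+(0,1/2)) *)
  (forall a b : int, (L2 a b + L1 a b = L2 (a + 1)%R b + L1 a (b + 1)%R)%N).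

Definition gequiv (m n : nat) (x y : int * int) : Prop :=
  exists k : int, y.1 = x.1 + k * m%:Z /\ y.2 = x.2 + k * n%:Z.

Definition transversal (m n : nat) (L : int -> int -> nat) (s : seq (int * int))
  : Prop :=
  uniq s /\
  (forall x y, x \in s -> y \in s -> gequiv m n x y -> x = y) /\
  (forall a b : int, (0 < L a b)%N -> exists2 y, y \in s & gequiv m n (a, b) y).

Definition Ppoly_spec (m n : nat) (L : int -> int -> nat)
  (c : int * int -> algC) (P : {poly algC}) : Prop :=
  exists s, transversal m n L s /\
    P = \prod_(x <- s) ('X - (c x)%:P) ^+ (L x.1 x.2).

Definition alpha1 (n : nat) : algC := - (n%:R).
Definition alpha2 (m : nat) : algC := m%:R.

(* x1 alpha1 + x2 alpha2 for the E_1 point (a+1/2, b) and the E_2 point (a, b+1/2) *)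
Definition cval1 (m n : nat) (x : int * int) : algC :=
  alpha1 n * (x.1%:~R + 2^-1) + alpha2 m * x.2%:~R.
Definition cval2 (m n : nat) (x : int * int) : algC :=
  alpha1 n * x.1%:~R + alpha2 m * (x.2%:~R + 2^-1).

Definition kleinian_rels (B : algType algC) (al1 al2 : algC) (p1 p2 : {poly algC})
  (H X1p X1m X2p X2m : B) : Prop :=
  [/\ H * X1p - X1p * H = al1 *: X1p,
      H * X1m - X1m * H = - (al1 *: X1m),
      H * X2p - X2p * H = al2 *: X2p,
      H * X2m - X2m * H = - (al2 *: X2m) &
  [/\ X1p * X1m = horner_alg (H - (al1 / 2)%:A) p1,
      X1m * X1p = horner_alg (H + (al1 / 2)%:A) p1,
      X2p * X2m = horner_alg (H - (al2 / 2)%:A) p2,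
      X2m * X2p = horner_alg (H + (al2 / 2)%:A) p2 &
  X1p * X2m = X2m * X1p /\ X1m * X2p = X2p * X1m]].

Definition H_torsion_free (B : algType algC) (H : B) : Prop :=
  forall (f : {poly algC}) (a : B), f != 0 -> horner_alg H f * a = 0 -> a = 0.

Definition Xword (B : algType algC) (X1p X2p : B) (i : seq nat) : B :=
  \prod_(j <- rev i) (if j == 1%N then X1p else X2p).
Definition Xword_star (B : algType algC) (X1m X2m : B) (i : seq nat) : B :=
  \prod_(j <- i) (if j == 1%N then X1m else X2m).

Definition pt := (Rdefinitions.R * Rdefinitions.R)%type.

Definition torus_equiv (m n : nat) (p q : pt) : Prop :=
  exists k : int, q.1 = p.1 + k%:~R * m%:R /\ q.2 = p.2 + k%:~R * n%:R.

Definition in_seg (p q x : pt) : Prop :=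
  exists t : Rdefinitions.R, 0 <= t <= 1 /\
    x.1 = p.1 + t * (q.1 - p.1) /\ x.2 = p.2 + t * (q.2 - p.2).

Definition in_edge1 (a b : int) (x : pt) : Prop :=
  x.1 = a%:~R + 2^-1 /\ `|x.2 - b%:~R| <= 2^-1.
Definition in_edge2 (a b : int) (x : pt) : Prop :=
  x.2 = b%:~R + 2^-1 /\ `|x.1 - a%:~R| <= 2^-1.

Definition in_support_edges (L1 L2 : int -> int -> nat) (x : pt) : Prop :=
  exists a b : int, ((0 < L1 a b)%N /\ in_edge1 a b x) \/
                    ((0 < L2 a b)%N /\ in_edge2 a b x).

Definition path_vertex (x1 x2 : int) (i : seq nat) (r : nat) : pt :=
  ((x1 + (count (pred1 1%N) (take r i))%:Z)%:~R,
   (x2 + (count (pred1 2%N) (take r i))%:Z)%:~R).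

Definition face_path_meets (m n : nat) (L1 L2 : int -> int -> nat)
  (x1 x2 : int) (i : seq nat) : Prop :=
  exists r : nat, (r < size i)%N /\
    exists p q : pt, in_seg (path_vertex x1 x2 i r) (path_vertex x1 x2 i r.+1) p /\
      in_support_edges L1 L2 q /\ torus_equiv m n p q.

(* Main.v *)
Require Import Defs.
From HB Require Import structures.
From mathcomp Require Import all_boot all_order all_algebra all_field.
From mathcomp Require Import Rstruct.
From mathcomp Require Import ring lra zify.
Import Order.TTheory GRing.Theory Num.Theory.
Local Open Scope ring_scope.

Lemma hornerA_shift (B : algType algC) (H : B) (c : algC) (p : {poly algC}) :
  horner_alg H (p \Po ('X + c%:P)) = horner_alg (H + c%:A) p.
Proof.
elim/poly_ind: p => [|p d IH]; first by rewrite comp_poly0 !rmorph0.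
rewrite comp_poly_MXaddC !rmorphD !rmorphM /= IH !horner_algX !horner_algC.
by rewrite rmorphD /= horner_algX horner_algC.
Qed.

Lemma comm_m (B : algType algC) (H Xm : B) (al : algC) :
  H * Xm - Xm * H = - (al *: Xm) -> forall p,
  Xm * horner_alg H p = horner_alg (H + al%:A) p * Xm.
Proof.
move=> hr.
have e : Xm * H = (H + al%:A) * Xm.
  have hr' : al *: Xm = Xm * H - H * Xm by rewrite -opprB hr opprK.
  by rewrite mulrDl mulr_algl hr' addrC subrK.
elim/poly_ind => [|p d IH]; first by rewrite !rmorph0 mulr0 mul0r.
rewrite !rmorphD !rmorphM /= !horner_algX !horner_algC mulrDr mulrDl.
rewrite [Xm * (_ * H)]mulrA IH -[_ * Xm * H]mulrA e mulrA; congr (_ + _).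
by rewrite mulr_algl -scalerAr mulr1.
Qed.

Lemma horner_inj (B : algType algC) (H : B) :
  H_torsion_free H -> (1 : B) != 0 -> injective (horner_alg H).
Proof.
move=> ht h1 f g e; apply/eqP; rewrite -subr_eq0; apply/negPn/negP => hd.
have := ht _ 1 hd; rewrite mulr1 rmorphB /= e subrr => /(_ erefl) h.
by move: h1; rewrite h eqxx.
Qed.

Definition aj (a1 a2 : algC) (j : nat) := if j == 1%N then a1 else a2.
Definition Pj (P1 P2 : {poly algC}) (j : nat) := if j == 1%N then P1 else P2.

Fixpoint Fpoly (a1 a2 : algC) (P1 P2 : {poly algC}) (i : seq nat) : {poly algC} :=
  match i with
  | [::] => 1
  | j :: i' => (Fpoly a1 a2 P1 P2 i' \Po ('X + (aj a1 a2 j)%:P)) *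
               (Pj P1 P2 j \Po ('X + (aj a1 a2 j / 2)%:P))
  end.

Lemma XX (B : algType algC) (a1 a2 : algC) (P1 P2 : {poly algC}) (H X1p X1m X2p X2m : B) i :
  kleinian_rels a1 a2 P1 P2 H X1p X1m X2p X2m ->
  Xword_star X1m X2m i * Xword X1p X2p i = horner_alg H (Fpoly a1 a2 P1 P2 i).
Proof.
case=> h1 h2 h3 h4 [h5 h6 h7 h8 _].
elim: i => [|j i IH].
  by rewrite /Xword_star /Xword /= !big_nil mulr1 rmorph1.
rewrite /Xword_star /Xword rev_cons big_cons -cats1 big_cat big_seq1 /=.
rewrite -/(Xword_star X1m X2m i) -/(Xword X1p X2p i).
rewrite rmorphM /= !hornerA_shift /aj /Pj.
case: (j == 1%N).
  by rewrite mulrA -(mulrA X1m) IH (@comm_m _ _ _ _ h2) -mulrA h6.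
by rewrite mulrA -(mulrA X2m) IH (@comm_m _ _ _ _ h4) -mulrA h8.
Qed.

Lemma Froot a1 a2 P1 P2 (i : seq nat) (mu : algC) :
  (Fpoly a1 a2 P1 P2 i).[mu] = 0 <->
  exists r, (r < size i)%N /\
    (Pj P1 P2 (nth 0%N i r)).[mu + \sum_(j <- take r i) aj a1 a2 j + aj a1 a2 (nth 0%N i r) / 2] = 0.
Proof.
elim: i mu => [|j i IH] mu /=.
  split; first by rewrite hornerC => /eqP; rewrite oner_eq0.
  by case=> r [].
rewrite hornerM !horner_comp !hornerD !hornerX !hornerC.
split.
  move/eqP; rewrite mulf_eq0 => /orP [/eqP h|/eqP h].
    have [r [hr hv]] := (IH _).1 h.
    by exists r.+1; split => //=; rewrite big_cons addrA.
  by exists 0%N; split => //=; rewrite big_nil addr0.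
case=> [[|r]] /= [hr hv]; apply/eqP; rewrite mulf_eq0; apply/orP.
  by right; rewrite big_nil addr0 in hv; apply/eqP.
left; apply/eqP; apply: (IH _).2; exists r; split => //.
by rewrite big_cons addrA in hv.
Qed.
Lemma per_all (m n : nat) (L : int -> int -> nat) :
  (forall a b, L (a + m%:Z) (b + n%:Z) = L a b) ->
  forall k a b, L (a + k * m%:Z) (b + k * n%:Z) = L a b.
Proof.
move=> hp.
have pos : forall (k : nat) a b, L (a + k%:Z * m%:Z) (b + k%:Z * n%:Z) = L a b.
  elim=> [|k IH] a b; first by rewrite !mul0r !addr0.
  have -> : a + k.+1%:Z * m%:Z = (a + k%:Z * m%:Z) + m%:Z by rewrite intS; ring.
  have -> : b + k.+1%:Z * n%:Z = (b + k%:Z * n%:Z) + n%:Z by rewrite intS; ring.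
  by rewrite hp IH.
case=> [k|k] a b; first exact: pos.
rewrite NegzE !mulNr.
by have := pos k.+1 (a - k.+1%:Z * m%:Z) (b - k.+1%:Z * n%:Z); rewrite !subrK => <-.
Qed.

Lemma coprime_sol (m n : nat) (d1 d2 : int) : coprime m n ->
  - (n%:Z) * d1 + m%:Z * d2 = 0 -> exists k, d1 = k * m%:Z /\ d2 = k * n%:Z.
Proof.
move=> hc e.
have [u [v huv]] := Bezoutz m n.
rewrite /gcdz /= (eqP hc) in huv.
have h' : n%:Z * d1 - m%:Z * d2 = - (- (n%:Z) * d1 + m%:Z * d2) by ring.
rewrite e oppr0 in h'.
exists (u * d1 + v * d2); split; apply/eqP; rewrite -subr_eq0; apply/eqP.
  transitivity (d1 * (1 - (u * m%:Z + v * n%:Z)) + v * (n%:Z * d1 - m%:Z * d2)); first by ring.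
  by rewrite huv subrr h' !mulr0 addr0.
transitivity (d2 * (1 - (u * m%:Z + v * n%:Z)) - u * (n%:Z * d1 - m%:Z * d2)); first by ring.
by rewrite huv subrr h' !mulr0 subr0.
Qed.

Lemma rootP (m n : nat) (L : int -> int -> nat) (c : int * int -> algC) (P : {poly algC}) (z : algC) :
  Ppoly_spec m n L c P ->
  (forall a b, L (a + m%:Z) (b + n%:Z) = L a b) ->
  (forall a b k, c (a + k * m%:Z, b + k * n%:Z) = c (a, b)) ->
  (P.[z] = 0 <-> exists a b, (0 < L a b)%N /\ c (a, b) = z).
Proof.
case=> s [[us [_ hcov]] ->] hper hc; rewrite horner_prod; split.
  move/eqP; rewrite prodf_seq_eq0 => /hasP [[a b] xs /=].
  rewrite horner_exp hornerXsubC expf_eq0 subr_eq0 => /andP [hL /eqP hz].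
  by exists a, b; split.
case=> a [b [hL hz]].
have [[y1 y2] ys [k [/= e1 e2]]] := hcov a b hL.
apply/eqP; rewrite prodf_seq_eq0; apply/hasP; exists (y1, y2) => //=.
rewrite horner_exp hornerXsubC expf_eq0 subr_eq0 e1 e2 per_all // hL /=.
by rewrite hc hz.
Qed.

Lemma cval1_inv m n a b k : cval1 m n (a + k * m%:Z, b + k * n%:Z) = cval1 m n (a, b).
Proof.
rewrite /cval1 /alpha1 /alpha2 /= !intrD !intrM.
have hm : ((m%:Z)%:~R : algC) = m%:R by [].
have hn : ((n%:Z)%:~R : algC) = n%:R by [].
rewrite hm hn; ring.
Qed.

Lemma cval2_inv m n a b k : cval2 m n (a + k * m%:Z, b + k * n%:Z) = cval2 m n (a, b).
Proof.
rewrite /cval2 /alpha1 /alpha2 /= !intrD !intrM.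
have hm : ((m%:Z)%:~R : algC) = m%:R by [].
have hn : ((n%:Z)%:~R : algC) = n%:R by [].
rewrite hm hn; ring.
Qed.
Notation RR := Rdefinitions.R.

Lemma int_small (z : int) : - (2^-1) <= (z%:~R : RR) -> (z%:~R : RR) <= 2^-1 -> z = 0.
Proof.
move=> h1 h2; case: (ltrgtP z 0) => // hz.
  have : z <= -1 by lia.
  rewrite -(ler_int RR) => h; have e : ((-1 : int)%:~R : RR) = -1 by [].
  rewrite e in h; exfalso; lra.
have : 1 <= z by lia.
rewrite -(ler_int RR) => h; have e : ((1 : int)%:~R : RR) = 1 by [].
rewrite e in h; exfalso; lra.
Qed.

Lemma int_nhalf (z : int) : (z%:~R : RR) <> 2^-1.
Proof.
move=> h.
have h2 : ((z * 2)%:~R : RR) = (1 : int)%:~R.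
  rewrite intrM h; have e : ((2 : int)%:~R : RR) = 2 by [].
  by rewrite e mulVf // pnatr_eq0.
have := intr_inj h2; lia.
Qed.

Lemma geo1 (m n : nat) (L1 L2 : int -> int -> nat) (V1 V2 : int) :
  (forall a b, L1 (a + m%:Z) (b + n%:Z) = L1 a b) ->
  (exists p q : pt, in_seg (V1%:~R, V2%:~R) ((V1 + 1)%:~R, V2%:~R) p /\
      in_support_edges L1 L2 q /\ torus_equiv m n p q) <-> (0 < L1 V1 V2)%N.
Proof.
move=> hper; split.
  case=> p [q [[t [/andP[t0 t1] [/= hp1 hp2]]] [[a [b [[hL [hq1 hq2]]|[hL [hq1 hq2]]]]] [k [e1 e2]]]]].
    have hz2 : (((V2 + k * n%:Z - b)%:~R) : RR) = V2%:~R + k%:~R * n%:R - b%:~R.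
      by rewrite intrB intrD intrM.
    have hz1 : (((a - V1 - k * m%:Z)%:~R) : RR) = a%:~R - V1%:~R - k%:~R * m%:R.
      by rewrite !intrB intrM.
    have e1' : ((V1 + 1)%:~R : RR) = V1%:~R + 1 by rewrite intrD.
    rewrite e1' in hp1.
    move: hq2; rewrite ler_norml => /andP [h1 h2].
    have z2 : V2 + k * n%:Z - b = 0.
      apply: int_small; rewrite hz2; lra.
    have z1 : a - V1 - k * m%:Z = 0.
      apply: int_small; rewrite hz1; lra.
    have -> : V1 = a - k * m%:Z by lia.
    have -> : V2 = b - k * n%:Z by lia.
    by rewrite -(@per_all _ _ _ hper k) !subrK.
  have hz2 : (((V2 + k * n%:Z - b)%:~R) : RR) = V2%:~R + k%:~R * n%:R - b%:~R.
    by rewrite intrB intrD intrM.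
  exfalso; apply: (@int_nhalf (V2 + k * n%:Z - b)); rewrite hz2; lra.
move=> hL.
exists (V1%:~R + 2^-1, V2%:~R), (V1%:~R + 2^-1, V2%:~R).
have e1' : ((V1 + 1)%:~R : RR) = V1%:~R + 1 by rewrite intrD.
split; first by exists (2^-1); rewrite e1' /=; split; [apply/andP; split; lra | split; lra].
split; first by exists V1, V2; left; split => //; split => //=; rewrite subrr normr0; lra.
by exists 0; rewrite /= !mul0r !addr0.
Qed.

Lemma geo2 (m n : nat) (L1 L2 : int -> int -> nat) (V1 V2 : int) :
  (forall a b, L2 (a + m%:Z) (b + n%:Z) = L2 a b) ->
  (exists p q : pt, in_seg (V1%:~R, V2%:~R) (V1%:~R, (V2 + 1)%:~R) p /\
      in_support_edges L1 L2 q /\ torus_equiv m n p q) <-> (0 < L2 V1 V2)%N.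
Proof.
move=> hper; split.
  case=> p [q [[t [/andP[t0 t1] [/= hp1 hp2]]] [[a [b [[hL [hq1 hq2]]|[hL [hq1 hq2]]]]] [k [e1 e2]]]]].
    have hz1 : (((V1 + k * m%:Z - a)%:~R) : RR) = V1%:~R + k%:~R * m%:R - a%:~R.
      by rewrite intrB intrD intrM.
    exfalso; apply: (@int_nhalf (V1 + k * m%:Z - a)); rewrite hz1; lra.
  have hz1 : (((V1 + k * m%:Z - a)%:~R) : RR) = V1%:~R + k%:~R * m%:R - a%:~R.
    by rewrite intrB intrD intrM.
  have hz2 : (((b - V2 - k * n%:Z)%:~R) : RR) = b%:~R - V2%:~R - k%:~R * n%:R.
    by rewrite !intrB intrM.
  have e2' : ((V2 + 1)%:~R : RR) = V2%:~R + 1 by rewrite intrD.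
  rewrite e2' in hp2.
  move: hq2; rewrite ler_norml => /andP [h1 h2].
  have z1 : V1 + k * m%:Z - a = 0.
    apply: int_small; rewrite hz1; lra.
  have z2 : b - V2 - k * n%:Z = 0.
    apply: int_small; rewrite hz2; lra.
  have -> : V1 = a - k * m%:Z by lia.
  have -> : V2 = b - k * n%:Z by lia.
  by rewrite -(@per_all _ _ _ hper k) !subrK.
move=> hL.
exists (V1%:~R, V2%:~R + 2^-1), (V1%:~R, V2%:~R + 2^-1).
have e2' : ((V2 + 1)%:~R : RR) = V2%:~R + 1 by rewrite intrD.
split; first by exists (2^-1); rewrite e2' /=; split; [apply/andP; split; lra | split; lra].
split; first by exists V1, V2; right; split => //; split => //=; rewrite subrr normr0; lra.
by exists 0; rewrite /= !mul0r !addr0.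
Qed.

Lemma step1 m n (L1 : int -> int -> nat) P1 (V1 V2 : int) : coprime m n ->
  (forall a b, L1 (a + m%:Z) (b + n%:Z) = L1 a b) ->
  Ppoly_spec m n L1 (cval1 m n) P1 ->
  (P1.[alpha1 n * V1%:~R + alpha2 m * V2%:~R + alpha1 n / 2] = 0 <-> (0 < L1 V1 V2)%N).
Proof.
move=> hc hp hs; rewrite (@rootP _ _ _ _ _ _ hs hp (@cval1_inv m n)); split.
  case=> a [b [hL e]].
  have ei : - (n%:Z) * (a - V1) + m%:Z * (b - V2) = 0.
    apply: (@intr_inj algC); rewrite !intrD !intrM !intrN !intrB.
    have hm : ((m%:Z)%:~R : algC) = m%:R by [].
    have hn : ((n%:Z)%:~R : algC) = n%:R by [].
    rewrite hm hn.
    transitivity (cval1 m n (a,b) - (alpha1 n * V1%:~R + alpha2 m * V2%:~R + alpha1 n / 2)).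
      by rewrite /cval1 /alpha1 /alpha2 /=; ring.
    by rewrite e subrr.
  have [k [k1 k2]] := @coprime_sol _ _ _ _ hc ei.
  have ea : a = V1 + k * m%:Z by lia.
  have eb : b = V2 + k * n%:Z by lia.
  by rewrite ea eb (@per_all _ _ _ hp) in hL.
move=> hL; exists V1, V2; split => //; rewrite /cval1 /alpha1 /alpha2 /=; ring.
Qed.

Lemma step2 m n (L2 : int -> int -> nat) P2 (V1 V2 : int) : coprime m n ->
  (forall a b, L2 (a + m%:Z) (b + n%:Z) = L2 a b) ->
  Ppoly_spec m n L2 (cval2 m n) P2 ->
  (P2.[alpha1 n * V1%:~R + alpha2 m * V2%:~R + alpha2 m / 2] = 0 <-> (0 < L2 V1 V2)%N).
Proof.
move=> hc hp hs; rewrite (@rootP _ _ _ _ _ _ hs hp (@cval2_inv m n)); split.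
  case=> a [b [hL e]].
  have ei : - (n%:Z) * (a - V1) + m%:Z * (b - V2) = 0.
    apply: (@intr_inj algC); rewrite !intrD !intrM !intrN !intrB.
    have hm : ((m%:Z)%:~R : algC) = m%:R by [].
    have hn : ((n%:Z)%:~R : algC) = n%:R by [].
    rewrite hm hn.
    transitivity (cval2 m n (a,b) - (alpha1 n * V1%:~R + alpha2 m * V2%:~R + alpha2 m / 2)).
      by rewrite /cval2 /alpha1 /alpha2 /=; ring.
    by rewrite e subrr.
  have [k [k1 k2]] := @coprime_sol _ _ _ _ hc ei.
  have ea : a = V1 + k * m%:Z by lia.
  have eb : b = V2 + k * n%:Z by lia.
  by rewrite ea eb (@per_all _ _ _ hp) in hL.
move=> hL; exists V1, V2; split => //; rewrite /cval2 /alpha1 /alpha2 /=; ring.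
Qed.

Lemma sum_aj_take a1 a2 (i : seq nat) r :
  all (fun j => (j == 1%N) || (j == 2%N)) i ->
  \sum_(j <- take r i) aj a1 a2 j =
  a1 * (count (pred1 1%N) (take r i))%:R + a2 * (count (pred1 2%N) (take r i))%:R.
Proof.
elim: i r => [|j i IH] r /=; first by case: r => [|r]; rewrite /= big_nil !mulr0 addr0.
case/andP => hj hall; case: r => [|r] /=; first by rewrite big_nil !mulr0 addr0.
rewrite big_cons IH // !natrD /aj.
by case/orP: hj => /eqP -> /=; ring.
Qed.

Theorem mainTheorem15
  (m n : nat) (L1 L2 : int -> int -> nat) (P1 P2 : {poly algC})
  (B : algType algC) (H X1p X1m X2p X2m : B)
  (i : seq nat) (lam x1 x2 : int) :
  coprime m n ->
  periodic_config m n L1 L2 ->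
  Ppoly_spec m n L1 (cval1 m n) P1 ->
  Ppoly_spec m n L2 (cval2 m n) P2 ->
  kleinian_rels (alpha1 n) (alpha2 m) P1 P2 H X1p X1m X2p X2m ->
  H_torsion_free H ->
  (1 : B) != 0 ->
  all (fun j => (j == 1%N) || (j == 2%N)) i ->
  - (n%:Z) * x1 + m%:Z * x2 = lam ->
  ((exists g : {poly algC},
       Xword_star X1m X2m i * Xword X1p X2p i = (H - (lam%:~R)%:A) * horner_alg H g)
   <-> face_path_meets m n L1 L2 x1 x2 i).
Proof.
move=> hc [hp1 [hp2 _]] hs1 hs2 hk ht h1 hall hlam.
have hXX := @XX _ _ _ _ _ H X1p X1m X2p X2m i hk.
set F := Fpoly (alpha1 n) (alpha2 m) P1 P2 i in hXX.
have stepA : (exists g : {poly algC},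
       Xword_star X1m X2m i * Xword X1p X2p i = (H - (lam%:~R)%:A) * horner_alg H g)
   <-> F.[lam%:~R] = 0.
  split.
    case=> g; rewrite hXX => e.
    have -> : F = ('X - (lam%:~R)%:P) * g.
      apply: (@horner_inj _ _ ht h1); rewrite e rmorphM /= rmorphB /= horner_algX horner_algC //.
    by rewrite hornerM hornerXsubC subrr mul0r.
  move=> hr; have /factor_theorem [q eq] : root F lam%:~R by apply/eqP.
  by exists q; rewrite hXX eq mulrC rmorphM /= rmorphB /= horner_algX horner_algC.
rewrite stepA /F Froot.
have hlamC : (lam%:~R : algC) = alpha1 n * x1%:~R + alpha2 m * x2%:~R.
  by rewrite -hlam intrD !intrM intrN.
have key : forall r, (r < size i)%N ->
  ((Pj P1 P2 (nth 0%N i r)).[lam%:~R + \sum_(j <- take r i) aj (alpha1 n) (alpha2 m) j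
      + aj (alpha1 n) (alpha2 m) (nth 0%N i r) / 2] = 0 <->
   exists p q : pt, in_seg (path_vertex x1 x2 i r) (path_vertex x1 x2 i r.+1) p /\
      in_support_edges L1 L2 q /\ torus_equiv m n p q).
  move=> r hr.
  have hj := allP hall _ (mem_nth 0%N hr).
  rewrite sum_aj_take // /path_vertex (take_nth 0%N hr) -cats1 !count_cat /=.
  set c1 := count (pred1 1%N) (take r i).
  set c2 := count (pred1 2%N) (take r i).
  have ev : forall a, lam%:~R + (alpha1 n * c1%:R + alpha2 m * c2%:R) + a =
     alpha1 n * (x1 + c1%:Z)%:~R + alpha2 m * (x2 + c2%:Z)%:~R + a.
    move=> a; rewrite hlamC !intrD.
    have e1 : ((c1%:Z)%:~R : algC) = c1%:R by [].
    have e2 : ((c2%:Z)%:~R : algC) = c2%:R by [].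
    rewrite e1 e2; ring.
  rewrite ev /Pj /aj.
  case/orP: hj => /eqP -> /=.
    rewrite (@step1 _ _ _ _ _ _ hc hp1 hs1) !addn0 PoszD addrA.
    exact: iff_sym (@geo1 _ _ _ _ _ _ hp1).
  rewrite (@step2 _ _ _ _ _ _ hc hp2 hs2) !addn0 PoszD addrA.
  exact: iff_sym (@geo2 _ _ _ _ _ _ hp2).
split; case=> r [hr h]; exists r; split => //; first by apply/(key r hr).
by apply/(key r hr).
Qed.
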